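(* Let $s,m$ be positive integers with $n=sm$ odd, and let $k$ be a positive integer with $\gcd(n,k)=1$. Fix $\alpha\in\mathbb{F}_{2^s}\setminus\{0\}$ and let \[ G(x)=x^{2^k+1}+\alpha+\alpha(x^{2^s}+x)^{2^n-1}=\begin{cases}x^{2^k+1}+\alpha, & x\in\mathbb{F}_{2^s},\\ x^{2^k+1}, & x\notin\mathbb{F}_{2^s},\end{cases} \] as a function $\mathbb{F}_{2^n}\to\mathbb{F}_{2^n}$. Then $\delta_{G,c}\leq 6$ for every $c\in\mathbb{F}_{2^s}\setminus\{1\}$. Moreover, if $3\nmid m$, then $\delta_{G,c}\leq 5$ for every $c\in\mathbb{F}_{2^s}\setminus\{1\}$.
   Context: For $F:\mathbb{F}_{2^n}\to\mathbb{F}_{2^n}$ and $c\in\mathbb{F}_{2^n}$, let ${}_c\Delta_F(a,b)=\#\{x\in\mathbb{F}_{2^n}: F(x+a)-cF(x)=b\}$ and the $c$-differential uniformity is $\delta_{F,c}=\max\{{}_c\Delta_F(a,b): a,b\in\mathbb{F}_{2^n},\ a\neq 0\text{ if } c=1\}$. *)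

(* Defs.v *)
From HB Require Import structures.
From mathcomp Require Import all_boot all_order all_algebra all_field.
Set Implicit Arguments. Unset Strict Implicit. Unset Printing Implicit Defensive.
Import GRing.Theory.
Local Open Scope ring_scope.

(* Membership in the subfield F_{2^s} of F (a finite field of char 2):
   x lies in F_{2^s} iff x^(2^s) = x. *)
Definition in_sub (F : finFieldType) (s : nat) (x : F) : bool :=
  x ^+ (2 ^ s) == x.

Definition cDelta (F : finFieldType) (f : F -> F) (c a b : F) : nat :=
  #|[set x : F | f (x + a) - c * f x == b]|.

Definition cDU (F : finFieldType) (f : F -> F) (c : F) : nat :=
  \max_(ab : F * F | (c != 1) || (ab.1 != 0)) cDelta f c ab.1 ab.2.

Definition Gfun (F : finFieldType) (n s k : nat) (alpha : F) (x : F) : F :=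
  x ^+ (2 ^ k + 1) + alpha + alpha * (x ^+ (2 ^ s) + x) ^+ (2 ^ n - 1).

(* Main.v *)
Require Import Defs.
From HB Require Import structures.
From mathcomp Require Import all_boot all_order all_algebra all_field.
From mathcomp Require Import ring.
Import GRing.Theory.
Local Open Scope ring_scope.

Lemma le3 (T : finType) (A : {set T}) :
  (forall x0 x1 x2 x3, x0 \in A -> x1 \in A -> x2 \in A -> x3 \in A ->
     x0 != x1 -> x0 != x2 -> x0 != x3 -> x1 != x2 -> x1 != x3 -> x2 != x3 -> False) ->
  (#|A| <= 3)%N.
Proof.
move=> H; rewrite cardE.
move: (enum_uniq A) (mem_enum A); case: (enum A) => [|y0 [|y1 [|y2 [|y3 r]]]] //= U M.
exfalso; move: U; rewrite !inE !negb_or -!andbA; case/and5P=> a01 a02 a03 _ /and5P[a12 a13 _ a23 _].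
have:= (M y0); have := (M y1); have := (M y2); have := (M y3); rewrite !inE !eqxx !orbT /= => m3 m2 m1 m0.

exact: (H y0 y1 y2 y3 (esym m0) (esym m1) (esym m2) (esym m3)).
Qed.
Lemma le1 (T : finType) (A : {set T}) :
  (forall x y, x \in A -> y \in A -> x = y) -> (#|A| <= 1)%N.
Proof. move=> H; apply/card_le1_eqP => x y hx hy; exact: H. Qed.

Section Aux.
Variable F : finFieldType.
Hypothesis ch2 : 2 \in [pchar F].

Lemma sub2 (x y : F) : x - y = x + y. Proof. by rewrite (oppr_pchar2 ch2). Qed.
Lemma add2 (x : F) : x + x = 0. Proof. by rewrite -mulr2n (mulrn_pchar ch2). Qed.

Lemma addK2 (x y : F) : x + y + y = x. Proof. by rewrite -addrA add2 addr0. Qed.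

Lemma frD j (x y : F) : (x + y) ^+ (2 ^ j) = x ^+ (2 ^ j) + y ^+ (2 ^ j).
Proof.
elim: j => [|j IH]; first by rewrite !expr1.
rewrite expnSr !exprM IH sqrrD (mulrn_pchar ch2) addr0.
by [].
Qed.

Lemma frM j (x y : F) : (x * y) ^+ (2 ^ j) = x ^+ (2 ^ j) * y ^+ (2 ^ j).
Proof. by rewrite exprMn. Qed.

Lemma frfr i j (x : F) : (x ^+ (2 ^ i)) ^+ (2 ^ j) = x ^+ (2 ^ (i + j)).
Proof. by rewrite -exprM -expnD. Qed.

Lemma frC i j (x : F) : (x ^+ i) ^+ j = (x ^+ j) ^+ i.
Proof. by rewrite -!exprM mulnC. Qed.

Lemma frinj j (x y : F) : x ^+ (2 ^ j) = y ^+ (2 ^ j) -> x = y.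
Proof.
move=> h; apply/eqP; rewrite -subr_eq0 sub2.
have : (x + y) ^+ (2 ^ j) == 0 by rewrite frD h add2.
by rewrite expf_eq0 => /andP[].
Qed.

Lemma fixmul a j (x : F) : x ^+ (2 ^ j) = x -> x ^+ (2 ^ (a * j)) = x.
Proof.
move=> h; elim: a => [|a IH]; first by rewrite mul0n expr1.
by rewrite mulSn addnC -frfr IH h.
Qed.

Lemma fixgcd i j (x : F) : (0 < i)%N -> x ^+ (2 ^ i) = x -> x ^+ (2 ^ j) = x ->
  x ^+ (2 ^ (gcdn i j)) = x.
Proof.
move=> i0 hi hj; have [a _ /dvdnP[t ht]] := Bezoutl j i0.
have e1 : x ^+ (2 ^ (gcdn i j + a * j)) = x ^+ (2 ^ (gcdn i j)).
  by rewrite addnC -frfr fixmul.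
by rewrite -e1 ht fixmul.
Qed.

Lemma fix01 k n (x : F) : (0 < k)%N -> coprime k n -> x ^+ (2 ^ k) = x ->
   x ^+ (2 ^ n) = x -> x = 0 \/ x = 1.
Proof.
move=> k0 co hk hn; have := @fixgcd k n x k0 hk hn; rewrite (eqP co) expn1 expr2 => h.
have : x * (x - 1) == 0 by rewrite mulrBr mulr1 h subrr.
rewrite mulf_eq0 subr_eq0 => /orP[/eqP|/eqP]; by [left|right].
Qed.


Section Gold.
Variables (k n : nat).
Hypothesis k0 : (0 < k)%N.
Hypothesis co : coprime k n.
Hypothesis HF : forall x : F, x ^+ (2 ^ n) = x.

Definition P (a c x : F) := (x + a) ^+ (2 ^ k + 1) + c * x ^+ (2 ^ k + 1).

Lemma expd (x : F) : x ^+ (2 ^ k + 1) = x ^+ (2 ^ k) * x.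
Proof. by rewrite addn1 exprSr. Qed.

Lemma diffd (u z : F) : (u + z) ^+ (2 ^ k + 1) =
  u ^+ (2 ^ k + 1) + u ^+ (2 ^ k) * z + u * z ^+ (2 ^ k) + z ^+ (2 ^ k + 1).
Proof. rewrite !expd frD. ring. Qed.

Lemma Pshift (a c x0 z : F) : P a c (x0 + z) = P a c x0 +
  ((1 + c) * z ^+ (2 ^ k + 1) + (x0 + a + c * x0) * z ^+ (2 ^ k)
    + ((x0 + a) ^+ (2 ^ k) + c * x0 ^+ (2 ^ k)) * z).
Proof.
rewrite /P (addrAC x0 z a) !diffd; ring.
Qed.

Lemma fix01n (t : F) : t ^+ (2 ^ k) = t -> t = 0 \/ t = 1.
Proof. by move=> h; apply: (@fix01 k n t k0 co h (HF t)). Qed.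

Lemma gold_no4 (a c b x0 x1 x2 x3 : F) : c != 1 ->
  P a c x0 = b -> P a c x1 = b -> P a c x2 = b -> P a c x3 = b ->
  x0 != x1 -> x0 != x2 -> x0 != x3 -> x1 != x2 -> x1 != x3 -> x2 != x3 -> False.
Proof.
move=> c1 h0 h1 h2 h3 d01 d02 d03 d12 d13 d23.
set A := x0 + a + c * x0.
set B := (x0 + a) ^+ (2 ^ k) + c * x0 ^+ (2 ^ k).
pose L w := (1 + c) + A * w + B * w ^+ (2 ^ k).
have key : forall x, P a c x = b -> x0 != x -> L (x + x0)^-1 = 0.
  move=> x hx dx.
  have nz : x + x0 != 0 by rewrite -sub2 subr_eq0 eq_sym.
  have E : (1 + c) * (x + x0) ^+ (2 ^ k + 1) + A * (x + x0) ^+ (2 ^ k) + B * (x + x0) = 0.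
    apply: (@addrI _ b); rewrite addr0 -{1}h0 -Pshift -hx.
    by rewrite addrC -addrA add2 addr0.
  move: (x + x0) nz E => z nz E.
  have nZ : z^+(2^k) != 0 by rewrite expf_neq0.
  rewrite /L exprVn -(mul0r ((z^+(2^k))^-1 * z^-1)) -E expd.
  move: (z^+(2^k)) nZ => Z nZ. field. by rewrite nZ nz.
have i1 := key _ h1 d01; have i2 := key _ h2 d02; have i3 := key _ h3 d03.
have dinv : forall y z, y != z -> (y + x0)^-1 != (z + x0)^-1.
  move=> y z dyz; apply: contra dyz => /eqP /invr_inj /addIr ->; by [].
have e12 := dinv _ _ d12; have e13 := dinv _ _ d13; have e23 := dinv _ _ d23.
move: i1 i2 i3 e12 e13 e23.
move: (x1 + x0)^-1 (x2 + x0)^-1 (x3 + x0)^-1 => w1 w2 w3 i1 i2 i3 e12 e13 e23.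
have lin : forall y z, L y = 0 -> L z = 0 -> A * (y - z) + B * (y - z) ^+ (2 ^ k) = 0.
  move=> y z hy hz.
  have -> : (y - z) ^+ (2 ^ k) = y ^+ (2 ^ k) - z ^+ (2 ^ k) by rewrite !sub2 frD.
  have : L y - L z = 0 by rewrite hy hz subrr.
  by rewrite /L => <-; ring.
have hu := lin _ _ i1 i2; have hv := lin _ _ i1 i3.
have nu : w1 - w2 != 0 by rewrite subr_eq0.
have nv : w1 - w3 != 0 by rewrite subr_eq0.
have nuv : w1 - w2 != w1 - w3 by apply: contra e23 => /eqP /addrI /oppr_inj ->.
move: hu hv nu nv nuv; move: (w1 - w2) (w1 - w3) => u v hu hv nu nv nuv.
have [A0|nA] := eqVneq A 0.
  move: hu; rewrite A0 mul0r add0r => /eqP; rewrite mulf_eq0 expf_eq0 (negPf nu) andbF orbF => /eqP B0.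
  move: i1; rewrite /L A0 B0 !mul0r !addr0 => /eqP; rewrite addr_eq0 (oppr_pchar2 ch2) eq_sym.
  by rewrite (negPf c1).
have nB : B != 0.
  apply/eqP => B0; move: hu; rewrite B0 mul0r addr0 => /eqP; rewrite mulf_eq0 (negPf nA) /=.
  by rewrite (negPf nu).
have uq : u ^+ (2 ^ k) = - (A * u) / B.
  by apply: (mulIf nB); rewrite divfK // -(addr0 (- (A * u))) -hu; ring.
have vq : v ^+ (2 ^ k) = - (A * v) / B.
  by apply: (mulIf nB); rewrite divfK // -(addr0 (- (A * v))) -hv; ring.
have ht : (u / v) ^+ (2 ^ k) = u / v.
  rewrite exprMn exprVn uq vq. field. by rewrite nv nB oppr_eq0 mulf_neq0.
case: (fix01n _ ht) => [/eqP|h1v].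
  by rewrite mulf_eq0 invr_eq0 (negPf nu) (negPf nv).
move/eqP: nuv; apply; by rewrite -[u](divfK nv) h1v mul1r.
Qed.

End Gold.


Section Sub.
Variables (s m k : nat).
Hypothesis s0 : (0 < s)%N.
Hypothesis m0 : (0 < m)%N.
Hypothesis oddn : odd (s * m).
Hypothesis k0 : (0 < k)%N.
Hypothesis co : coprime (s * m) k.
Hypothesis HF : forall x : F, x ^+ (2 ^ (s * m)) = x.

Definition inK (x : F) := x ^+ (2 ^ s) == x.

Lemma oddm : odd m. Proof. by move: oddn; rewrite oddM => /andP[]. Qed.
Lemma coK : coprime k (s * m). Proof. by rewrite coprime_sym. Qed.

Lemma fixK j (x : F) : inK x -> x ^+ (2 ^ (s * j)) = x.
Proof. by move=> /eqP h; rewrite mulnC fixmul. Qed.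

Lemma inKD (x y : F) : inK x -> inK y -> inK (x + y).
Proof. by rewrite /inK frD => /eqP -> /eqP ->. Qed.
Lemma inKM (x y : F) : inK x -> inK y -> inK (x * y).
Proof. by rewrite /inK frM => /eqP -> /eqP ->. Qed.
Lemma inKX (x : F) j : inK x -> inK (x ^+ j).
Proof. by rewrite /inK frC => /eqP ->. Qed.

Lemma K2 (x : F) : x ^+ (2 ^ (s * 2)) = x -> inK x.
Proof.
have g : gcdn (s * 2) (s * m) = s.
  by rewrite -muln_gcdr (eqP (_ : coprime 2 m)) ?muln1 // coprime2n oddm.
move=> h; have := @fixgcd (s * 2) (s * m) x _ h (HF x); rewrite g /inK => -> //.
by rewrite muln_gt0 s0.
Qed.

Lemma K3 (x : F) : ~~ (3 %| m)%N -> x ^+ (2 ^ (s * 3)) = x -> inK x.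
Proof.
move=> n3.
have g : gcdn (s * 3) (s * m) = s.
  by rewrite -muln_gcdr (eqP (_ : coprime 3 m)) ?muln1 // prime_coprime.
move=> h; have := @fixgcd (s * 3) (s * m) x _ h (HF x); rewrite g /inK => -> //.
by rewrite muln_gt0 s0.
Qed.

Lemma Pfr t (a c x : F) : a ^+ (2 ^ t) = a -> c ^+ (2 ^ t) = c ->
  P k a c (x ^+ (2 ^ t)) = (P k a c x) ^+ (2 ^ t).
Proof.
move=> ha hc; rewrite /P frD frM hc [in RHS](frC _ _ (x + a)) frD ha [in RHS](frC _ _ x) //.
Qed.

Lemma distK i d (x : F) : x ^+ (2 ^ (s * i)) = x ^+ (2 ^ (s * (i + d))) ->
  x ^+ (2 ^ (s * d)) = x.
Proof.
rewrite mulnDr addnC -frfr => h; apply/esym; exact: (frinj _ _ _ h).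
Qed.

Lemma rootsK (a c b x : F) : ~~ (3 %| m)%N -> c != 1 -> inK a -> inK c -> inK b ->
  P k a c x = b -> inK x.
Proof.
move=> n3 c1 ha hc hb hx; apply/negPn/negP => nx.
have r j : P k a c (x ^+ (2 ^ (s * j))) = b.
  rewrite Pfr; [by rewrite hx fixK | exact: fixK | exact: fixK].
have d1 : forall i, x ^+ (2 ^ (s * i)) != x ^+ (2 ^ (s * (i + 1))).
  move=> i; apply/eqP => /distK; rewrite muln1 => /eqP; exact/negP.
have d2 : forall i, x ^+ (2 ^ (s * i)) != x ^+ (2 ^ (s * (i + 2))).
  move=> i; apply/eqP => /distK /K2; exact/negP.
have d3 : forall i, x ^+ (2 ^ (s * i)) != x ^+ (2 ^ (s * (i + 3))).
  move=> i; apply/eqP => /distK /(K3 _ n3); exact/negP.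
exact: (@gold_no4 k (s * m) k0 coK HF a c b _ _ _ _ c1 (r 0%N) (r 1%N) (r 2%N) (r 3%N)
   (d1 0%N) (d2 0%N) (d3 0%N) (d1 1%N) (d2 1%N) (d1 2%N)).
Qed.


Lemma sub_le1 (a c1 c2 u1 u2 : F) : ~~ inK a -> c1 != 0 -> inK c1 -> inK c2 ->
  inK u1 -> inK u2 ->
  c1 * (u1 + a) ^+ (2 ^ k + 1) + c2 * u1 ^+ (2 ^ k + 1) =
  c1 * (u2 + a) ^+ (2 ^ k + 1) + c2 * u2 ^+ (2 ^ k + 1) -> u1 = u2.
Proof.
move=> na nc1 hc1 hc2 hu1 hu2 E.
set sa := a ^+ (2 ^ s).
pose Q (b u : F) := c1 * (u + b) ^+ (2 ^ k + 1) + c2 * u ^+ (2 ^ k + 1).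
have hs : forall u, inK u -> (Q a u) ^+ (2 ^ s) = Q sa u.
  move=> u hu; rewrite /Q frD !frM (eqP hc1) (eqP hc2) (frC _ _ (u + a)) frD (eqP hu).
  by rewrite (frC _ _ u) (eqP hu).
have E1 : Q a u1 = Q a u2 by exact: E.
have E2 : Q sa u1 = Q sa u2 by rewrite -hs // -hs // E1.
have D : Q a u1 - Q sa u1 - (Q a u2 - Q sa u2) = c1 * ((u1 ^+ (2 ^ k) - u2 ^+ (2 ^ k)) * (a - sa)
   + (u1 - u2) * (a ^+ (2 ^ k) - sa ^+ (2 ^ k))).
  rewrite /Q !diffd; ring.
move: D; rewrite E1 E2 subrr => /esym /eqP; rewrite mulf_eq0 (negPf nc1) /= => /eqP.
have -> : u1 ^+ (2 ^ k) - u2 ^+ (2 ^ k) = (u1 - u2) ^+ (2 ^ k) by rewrite !sub2 frD.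
have -> : a ^+ (2 ^ k) - sa ^+ (2 ^ k) = (a - sa) ^+ (2 ^ k) by rewrite !sub2 frD.
have hw : inK (u1 - u2) by rewrite sub2 inKD.
have ne : a - sa != 0.
  by rewrite subr_eq0 eq_sym.
have de : inK (a - sa) -> False.
  rewrite sub2 /inK frD => /eqP h.
  have h2 : sa ^+ (2 ^ s) = a by apply: (@addIr _ sa); rewrite addrC h.
  move: h2; rewrite /sa frfr addnn -muln2 => /K2; exact/negP.
move=> Ew; apply/eqP; rewrite -subr_eq0; apply/eqP.
move: hw Ew de; move: (u1 - u2) (a - sa) ne => w e ne hw Ew de.
apply/eqP/negP => /negP nw.
have nE : e ^+ (2 ^ k) != 0 by rewrite expf_neq0.
have wq : w ^+ (2 ^ k) = - (w * e ^+ (2 ^ k)) / e.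
  by apply: (mulIf ne); rewrite divfK // -(addr0 (- (w * e ^+ (2 ^ k)))) -Ew; ring.
have ht : (w / e) ^+ (2 ^ k) = w / e.
  rewrite exprMn exprVn wq (oppr_pchar2 ch2); move: (e ^+ (2 ^ k)) nE => E' nE.
  field; by rewrite nE ne.
case: (@fix01 k (s * m) (w / e) k0 coK ht (HF _)) => [/eqP|h1].
  by rewrite mulf_eq0 invr_eq0 (negPf nw) (negPf ne).
apply: de; suff -> : e = w by [].
by rewrite -[w](divfK ne) h1 mul1r.
Qed.

Lemma dinj (u1 u2 : F) : u1 ^+ (2 ^ k + 1) = u2 ^+ (2 ^ k + 1) -> u1 = u2.
Proof.
move=> E.
have [u20|nu2] := eqVneq u2 0.
  move: E; rewrite u20 expr0n addn1 /= => /eqP; rewrite expf_eq0 /= => /eqP //.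
have td : (u1 / u2) ^+ (2 ^ k) * (u1 / u2) = 1.
  by rewrite -expd exprMn exprVn E divff // expf_neq0.
have nt : u1 / u2 != 0.
  by apply/eqP => t0; move: td; rewrite t0 mulr0 => /eqP; rewrite eq_sym oner_eq0.
have tq : (u1 / u2) ^+ (2 ^ k) = (u1 / u2)^-1.
  by apply: (mulIf nt); rewrite td mulVf.
have ht : (u1 / u2) ^+ (2 ^ (k + k)) = u1 / u2.
  by rewrite -frfr tq exprVn tq invrK.
have cok2 : coprime (k + k) (s * m).
  by rewrite addnn -muln2 coprimeMl coK /= coprime2n.
case: (@fix01 (k + k) (s * m) (u1 / u2) _ cok2 ht (HF _)) => [|/eqP|h1].
- by rewrite addn_gt0 k0.
- by rewrite (negPf nt).
- by rewrite -[u1](divfK nu2) h1 mul1r.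
Qed.


Variable alpha : F.
Hypothesis halpha : inK alpha.

Definition eps (x : F) := if inK x then alpha else 0.

Lemma Gval (x : F) : Gfun (s * m) s k alpha x = x ^+ (2 ^ k + 1) + eps x.
Proof.
rewrite /Gfun /eps /inK; case: ifP => h.
  rewrite (eqP h) add2 expr0n.
  have -> : (2 ^ (s * m) - 1 == 0)%N = false.
    by rewrite subn_eq0 leqNgt -{1}(expn0 2) ltn_exp2l // muln_gt0 s0 m0.
  by rewrite mulr0 addr0.
have ny : x ^+ (2 ^ s) + x != 0.
  by apply: contraFN h; rewrite -sub2 subr_eq0.
have -> : (x ^+ (2 ^ s) + x) ^+ (2 ^ (s * m) - 1) = 1.
  apply: (mulfI ny); rewrite mulr1 -exprS subn1 prednK ?HF //.
  by rewrite expn_gt0.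
by rewrite mulr1 -addrA add2 addr0.
Qed.

Section Count.
Variable c : F.
Hypothesis hc : inK c.
Hypothesis c1 : c != 1.

Let G := Gfun (s * m) s k alpha.

Lemma memS (a b x : F) :
  x \in [set x : F | G (x + a) - c * G x == b] =
  (P k a c x + eps (x + a) + c * eps x == b).
Proof. rewrite inE /G !Gval sub2 /P; congr (_ == b); ring. Qed.

Lemma memS2 (a b x : F) :
  (G (x + a) - c * G x == b) = (P k a c x + eps (x + a) + c * eps x == b).
Proof. by rewrite -memS inE. Qed.

Lemma gold3 (a b : F) : (#|[set x : F | P k a c x == b]| <= 3)%N.
Proof.
apply: le3 => x0 x1 x2 x3; rewrite !inE => /eqP h0 /eqP h1 /eqP h2 /eqP h3.
exact: (@gold_no4 k (s * m) k0 coK HF a c b x0 x1 x2 x3 c1 h0 h1 h2 h3).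
Qed.

Lemma inKP (a x : F) : inK a -> inK x -> inK (P k a c x).
Proof.
move=> ha hx; rewrite /P; apply: inKD; first by apply/inKX/inKD.
by apply/inKM => //; apply/inKX.
Qed.

Lemma eps_in (x : F) : inK x -> eps x = alpha.
Proof. by rewrite /eps => ->. Qed.
Lemma eps_out (x : F) : ~~ inK x -> eps x = 0.
Proof. by rewrite /eps => /negPf ->. Qed.

Lemma inK_shift (a x : F) : inK a -> inK (x + a) = inK x.
Proof.
move=> ha; apply/idP/idP => h; last exact: inKD.
by have := inKD _ _ h ha; rewrite -addrA add2 addr0.
Qed.

Lemma caseK6 (a b : F) : inK a ->
  (cDelta G c a b <= 6)%N.
Proof.
move=> ha; rewrite /cDelta.
apply: (@leq_trans #|[set x | P k a c x == b + (alpha + c * alpha)] :|: [set x | P k a c x == b]|).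
  apply: subset_leq_card; apply/subsetP => x; rewrite memS /eps inK_shift // !inE.
  case: ifP => hx; last by rewrite mulr0 !addr0 => ->; rewrite orbT.
  by rewrite -addrA => /eqP <-; rewrite addK2 eqxx.
apply: leq_trans (leq_card_setU _ _).1 _.
by rewrite (_ : 6 = 3 + 3)%N // leq_add // gold3.
Qed.

Lemma caseK3 (a b : F) : ~~ (3 %| m)%N -> inK a ->
  (cDelta G c a b <= 3)%N.
Proof.
move=> n3 ha; rewrite /cDelta.
case hb: (inK b).
  apply: leq_trans (gold3 a (b + (alpha + c * alpha))).
  apply: subset_leq_card; apply/subsetP => x; rewrite memS /eps inK_shift // !inE.
  case: ifP => hx; last first.
    rewrite mulr0 !addr0 => /eqP hP.
    by move: hx; rewrite (rootsK _ _ _ _ n3 c1 ha hc hb hP).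
  by rewrite -addrA => /eqP <-; rewrite addK2 eqxx.
apply: leq_trans (gold3 a b).
apply: subset_leq_card; apply/subsetP => x; rewrite memS /eps inK_shift // !inE.
case: ifP => hx; last by rewrite mulr0 !addr0.
move=> /eqP hP; move: hb; rewrite -hP.
have -> : inK (P k a c x + alpha + c * alpha) by apply: inKD; [apply: inKD => //; exact: inKP | exact: inKM].
by [].
Qed.

Lemma out_shift (a x : F) : inK x -> ~~ inK a -> ~~ inK (x + a).
Proof.
move=> hx na; apply/negP => h; move/negP: na; apply.
by have := inKD _ _ h hx; rewrite addrAC add2 add0r.
Qed.

Lemma inK1 : inK 1. Proof. by rewrite /inK expr1n. Qed.

Lemma caseNK5 (a b : F) : ~~ inK a -> (cDelta G c a b <= 5)%N.
Proof.
move=> na; rewrite /cDelta.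
have H1 : (#|[set x | ((x \in [set x : F | G (x + a) - c * G x == b]) && inK x)%R]| <= 1)%N.
  apply: le1 => x y; rewrite !inE !memS2 => /andP[hx kx] /andP[hy ky].
  move: hx hy; rewrite /eps (negPf (out_shift _ _ kx na)) (negPf (out_shift _ _ ky na)) kx ky !addr0.
  move=> /eqP hx /eqP hy.
  apply: (sub_le1 _ _ _ _ _ na (oner_neq0 _) inK1 hc kx ky); rewrite !mul1r.
  by apply: (@addIr _ (c * alpha)); exact: (etrans hx (esym hy)).
have H2 : (#|[set x | ((x \in [set x : F | G (x + a) - c * G x == b]) && inK (x + a))%R]| <= 1)%N.
  apply: le1 => x y; rewrite !inE !memS2 => /andP[hx kx] /andP[hy ky].
  have nx : ~~ inK x by have := out_shift _ _ kx na; rewrite addK2.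
  have ny : ~~ inK y by have := out_shift _ _ ky na; rewrite addK2.
  move: hx hy; rewrite /eps (negPf nx) (negPf ny) kx ky mulr0 !addr0.
  move=> /eqP hx /eqP hy.
  have hP : P k a c x = P k a c y by apply: (@addIr _ alpha); exact: (etrans hx (esym hy)).
  apply: (@addIr _ a).
  move: hP; rewrite /P -{2}(addK2 x a) -{2}(addK2 y a).
  move: kx ky; move: (x + a) (y + a) => u v ku kv hP.
  have [c0|nc] := eqVneq c 0.
    by move: hP; rewrite c0 !mul0r !addr0; apply: dinj.
  apply: (sub_le1 _ _ _ _ _ na nc hc inK1 ku kv); rewrite !mul1r.
  by rewrite addrC hP addrC.
apply: (@leq_trans (1 + 1 + 3)%N) => //.
apply: leq_trans (leq_add (leq_add H1 H2) (gold3 a b)).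
apply: leq_trans (leq_add (leq_card_setU _ _).1 (leqnn _)).
apply: leq_trans (leq_card_setU _ _).1.
apply: subset_leq_card; apply/subsetP => x hx.
move: (hx); rewrite !inE !memS2 => hP; rewrite hP /=.
case kx: (inK x) => //; case ky: (inK (x + a)) => //=.
by move: hP; rewrite /eps kx ky mulr0 !addr0.
Qed.

End Count.

End Sub.

End Aux.

Theorem theorem2p14 (s m k : nat) (F : finFieldType) (alpha : F) :
  (0 < s)%N -> (0 < m)%N -> odd (s * m) -> (0 < k)%N -> coprime (s * m) k ->
  #|F| = (2 ^ (s * m))%N ->
  in_sub s alpha -> alpha != 0 ->
  (forall c : F, in_sub s c -> c != 1 ->
     (cDU (Gfun (s * m) s k alpha) c <= 6)%N) /\
  (~~ (3 %| m)%N -> forall c : F, in_sub s c -> c != 1 ->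
     (cDU (Gfun (s * m) s k alpha) c <= 5)%N).
Proof.
move=> s0 m0 oddn k0 co HF' ha na.
have ch2 : 2 \in [pchar F] := card_finPcharP HF' (isT : prime 2).
have HF : forall x : F, x ^+ (2 ^ (s * m)) = x by move=> x; rewrite -HF' expf_card.
split.
  move=> c hc c1; apply/bigmax_leqP => [[a b]] _ /=.
  case ka: (@inK F s a).
    by apply: caseK6.
  apply: leq_trans (_ : 5 <= 6)%N => //.
  by apply: caseNK5 => //; rewrite ka.
move=> n3 c hc c1; apply/bigmax_leqP => [[a b]] _ /=.
case ka: (@inK F s a).
  apply: leq_trans (_ : 3 <= 5)%N => //.
  by apply: caseK3.
by apply: caseNK5 => //; rewrite ka.
Qed.
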